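(* For every positive integer $n$, \[ Z(n)\equiv(-1)^{\delta_{n}}\pmod{n}, \] where $\delta_n=1$ if $n$ is non-composite ($n=1$ or $n$ prime) and $\delta_n=0$ otherwise, and $Z(n)=\sum_{k=0}^{n-1}\frac{1+(-1)^{k}k!(n-k-1)!}{n}$. *)

(* Defs.v *)
From mathcomp Require Import all_boot all_order all_algebra.
Set Implicit Arguments. Unset Strict Implicit. Unset Printing Implicit Defensive.
Import Order.TTheory GRing.Theory Num.Theory.
Local Open Scope ring_scope.

Definition noncomposite (n : nat) : bool := (n == 1)%N || prime n.

Definition delta (n : nat) : nat := noncomposite n.

Definition Zsum (n : nat) : rat :=
  \sum_(k < n) (1 + (-1) ^+ k * (k`!)%:R * ((n - k - 1)`!)%:R) / n%:R.

(* Main.v *)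
Require Import Defs.
From mathcomp Require Import all_boot all_order all_algebra.
From mathcomp Require Import zify ring lra.
Import GRing.Theory Num.Theory.
Local Open Scope ring_scope.

Lemma fact_dvd (m n : nat) : (m <= n)%N -> (m`! %| n`!)%N.
Proof.
elim: n => [|n IH]; first by rewrite leqn0 => /eqP->.
rewrite leq_eqVlt => /orP[/eqP->//|]; rewrite ltnS => /IH H.
by rewrite factS dvdn_mull.
Qed.

Lemma composite_dvd (n : nat) : (1 < n)%N -> ~~ odd n = false -> ~~ prime n ->
  (n %| n.-1`!)%N.
Proof.
move=> n1 nodd np.
have n0 : (0 < n)%N by lia.
set p := pdiv n.
have pn : (p ^ 2 <= n)%N.
  rewrite leqNgt; apply/negP => H; by move/negP: np; apply; apply: ltn_pdiv2_prime.
have pp : prime p by apply: pdiv_prime.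
have p2 := prime_gt1 pp.
have pd : (p %| n)%N by apply: pdiv_dvd.
set b := (n %/ p)%N.
have nb : n = (p * b)%N by rewrite /b mulnC divnK.
have pb : (p <= b)%N.
  rewrite -(leq_pmul2l (ltnW p2)) -nb; move: pn; by rewrite expnS expn1.
move: pb; rewrite leq_eqVlt => /orP[/eqP eb|lb].
-
  rewrite nb -eb.
  have p3 : (2 < p)%N.
    rewrite ltn_neqAle p2 andbT; apply/eqP => e2.
    by move: nodd; rewrite nb -eb -e2.
  apply: (@dvdn_trans ((p.*2)`!)).
    have e : (p.*2 = (p.*2).-1.+1)%N by lia.
    rewrite e factS -e.
    apply: dvdn_mul; first by rewrite -muln2 dvdn_mulr.
    apply: dvdn_fact; lia.
  apply: fact_dvd; nia.
- rewrite nb.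
  apply: (@dvdn_trans (b`!)).
    have e : b = b.-1.+1 by lia.
    rewrite [in X in (_ %| X)%N]e factS -e [(b * _)%N]mulnC; apply: dvdn_mul; last by [].
    apply: dvdn_fact; lia.
  apply: fact_dvd; nia.
Qed.

Lemma telesc (R : comPzRingType) (f : nat -> R) (j : nat) :
  \sum_(k < j) (-1) ^+ k * (f k + f k.+1) = f 0%N - (-1) ^+ j * f j.
Proof.
elim: j => [|j IH]; first by rewrite big_ord0 expr0 mul1r subrr.
rewrite big_ord_recr /= IH exprS; ring.
Qed.

Lemma key (m : nat) :
  (m.+2)%:R * \sum_(k < m.+1) (-1) ^+ k * (k`!)%:R * ((m.+1 - k - 1)`!)%:R
  = (m.+1)`!%:R * (1 + (-1) ^+ m) :> rat.
Proof.
pose f k := ((k`! * (m.+1 - k)`!)%N)%:R : rat.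
have E : forall k : 'I_m.+1, (m.+2)%:R * ((-1) ^+ k * (k`!)%:R * ((m.+1 - k - 1)`!)%:R)
    = (-1) ^+ k * (f k + f k.+1).
  move=> [k /= hk].
  have H : (m.+2 * (k`! * (m.+1-k-1)`!) = k`!*(m.+1-k)`! + k.+1`!*(m.+1-k.+1)`!)%N.
    have -> : (m.+1 - k - 1 = m - k)%N by lia.
    have -> : (m.+1 - k = (m - k).+1)%N by lia.
    have -> : (m.+1 - k.+1 = m - k)%N by lia.
    rewrite !factS.
    set A := k`!; set B := (m-k)`!.
    have em : m = (k + (m - k))%N by lia.
    rewrite [in LHS]em; set d := (m - k)%N; ring.
  rewrite /f -natrD -H !natrM; ring.
rewrite mulr_sumr (eq_bigr _ (fun k _ => E k)) telesc /f.
rewrite subn0 fact0 subnn fact0 !mul1n !muln1 exprS.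
rewrite mulN1r mulNr opprK; ring.
Qed.

Lemma Zsum_eq (n : nat) : Zsum n =
  (n%:R + \sum_(k < n) (-1) ^+ k * (k`!)%:R * ((n - k - 1)`!)%:R) / n%:R.
Proof.
by rewrite /Zsum -big_distrl /= big_split /= sumr_const card_ord.
Qed.

Theorem mainTheorem8 (n : nat) (hn : (0 < n)%N) :
  exists z : int, Zsum n = z%:~R /\ (z = (-1) ^+ delta n %[mod n%:Z])%Z.
Proof.
case: n hn => [//|m] _.
rewrite Zsum_eq.
set S := \sum_(k < m.+1) _.
have K := key m; rewrite -/S in K.
have n0 : (m.+1)%:R != 0 :> rat by rewrite pnatr_eq0.
case/boolP: (odd m) => om.
- exists 1; split.
    have S0 : S = 0.
      move: K; rewrite -signr_odd om expr1 subrr mulr0 => /eqP.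
      by rewrite mulf_eq0 pnatr_eq0 /= => /eqP.
    by rewrite S0 addr0 divff.
  rewrite /delta /noncomposite /=.
  have m1 : (m.+1 == 1)%N = false by case: m om {K} S n0.
  rewrite m1 /=.
  case/boolP: (prime m.+1) => pm /=; last by [].
  case: (even_prime pm) => [-> //|].
  by rewrite /= om.
- have [t et] : exists t, m = t.*2.
    exists m./2; by rewrite -[in LHS](odd_double_half m) (negbTE om).
  have dv : (t.+1 %| (t.*2)`!)%N.
    case: t et => [//|t] _; apply: dvdn_fact; lia.
  set F := (t.*2)`! in dv.
  set x := (F %/ t.+1)%N.
  have hx : (x * t.+1 = F)%N by rewrite /x divnK.
  have Sx : S = (m.+1)%:R * x%:R.
    apply: (mulfI (_ : (m.+2)%:R != 0 :> rat)); first by rewrite pnatr_eq0.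
    have E : ((m.+1)`! * 2 = m.+2 * (m.+1 * x))%N.
      rewrite et factS -/F -hx -!muln2; ring.
    rewrite K -signr_odd (negbTE om) expr0.
    have -> : (1 + 1 : rat) = 2%:R by [].
    by rewrite -!natrM E.
  exists (1 + x)%N; split.
    rewrite Sx -{1}[(m.+1)%:R]mulr1 -mulrDr mulrC mulKf //.
    by rewrite -[RHS]/((1 + x)%N%:R) natrD.
  apply/eqP; rewrite eqz_mod_dvd.
  have hx2 : (x * m.+1 + x = 2 * F)%N by rewrite et -hx -!muln2; ring.
  rewrite /delta /noncomposite /=.
  case: (posnP t) => [t0|tpos].
    by move: et; rewrite t0 => ->; rewrite dvd1z.
  have n1 : (m.+1 == 1)%N = false by apply/eqP; rewrite et -muln2; lia.
  rewrite n1 /=.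
  case/boolP: (prime m.+1) => pm /=.
  + have : (m.+1 %| 2 * F.+1)%N.
      rewrite dvdn_mull //.
      have W : (m.+1 %| m`!.+1)%N.
        by move: pm; rewrite Wilson //; rewrite et -muln2; lia.
      by move: W; rewrite et.
    have -> : (2 * F.+1 = x * m.+1 + (x + 2))%N by lia.
    rewrite dvdn_addr ?dvdn_mull // => H.
    rewrite dvdzE /=.
    by have -> : (1 + x + 1 = x + 2)%N by lia.
  + have : (m.+1 %| 2 * F)%N.
      rewrite dvdn_mull //.
      have C : (m.+1 %| m.+1.-1`!)%N.
        apply: composite_dvd pm; first by rewrite et -muln2; lia.
        by rewrite et /= odd_double.
      by move: C; rewrite et.
    rewrite -hx2 dvdn_addr ?dvdn_mull // => H.
    rewrite dvdzE /=.
    by have -> : (1 + x - 1 = x)%N by lia.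
Qed.
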